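(* Let $n\ge 1$ and let $f(x)=x^n+\sum_{i=1}^{n}c_i x^{n-i}$ be an irreducible polynomial over $\mathrm{GF}(2)$ with $f(x)\neq x$. Let $B$ be the binary matrix with $2^n-1$ rows and columns indexed by $j=0,1,2,\ldots$, whose rows are indexed by the nonzero initial states $s=(a_{-n},\ldots,a_{-1})\in\mathrm{GF}(2)^n\setminus\{0\}$, the row indexed by $s$ being the sequence $a_0,a_1,a_2,\ldots$ determined by $a_k=\sum_{i=1}^{n}c_i a_{k-i}$ (mod $2$) from the initial state $s$. Let $R$ be a set of $n$ distinct nonnegative integers and define the set polynomial $$g_R(x)=\prod_{\emptyset\neq Q\subseteq R}\ \sum_{r\in Q}x^{r}\in\mathrm{GF}(2)[x].$$ Then the submatrix of $B$ formed by the $n$ columns indexed by $R$ contains every nonzero binary $n$-tuple as a row if and only if $f(x)$ does not divide $g_R(x)$.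
   Context: Equivalently, the rows of $B$ are all cyclic shifts of all nonzero sequences satisfying the linear recurrence associated with $f(x)$. *)

(* Defs.v *)
From HB Require Import structures.
From mathcomp Require Import all_boot all_order all_algebra.
Set Implicit Arguments. Unset Strict Implicit. Unset Printing Implicit Defensive.
Import GRing.Theory.
Local Open Scope ring_scope.

(* Feedback coefficients: c i stands for c_{i+1}, i = 0..n-1. *)

Definition charpoly_lfsr (n : nat) (c : 'I_n -> 'F_2) : {poly 'F_2} :=
  'X^n + \sum_(i < n) (c i)%:P * 'X^(n - i.+1).

(* A state is a function st : nat -> 'F_2 where, at time k,
   st m = a_{k-n+m} for m < n (window (a_{k-n},...,a_{k-1})). *)
Definition lfsr_next (n : nat) (c : 'I_n -> 'F_2) (st : nat -> 'F_2) : 'F_2 :=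
  \sum_(i < n) c i * st (n - i.+1)%N.

Fixpoint lfsr_state (n : nat) (c : 'I_n -> 'F_2) (s : nat -> 'F_2) (k : nat)
  : nat -> 'F_2 :=
  match k with
  | 0 => s
  | k'.+1 => let st := lfsr_state c s k' in
             fun m => if (m.+1 < n)%N then st m.+1 else lfsr_next c st
  end.

(* Initial state s = (a_{-n},...,a_{-1}) given as a row vector: s_j = a_{j-n}. *)
Definition init_state (n : nat) (s : 'rV['F_2]_n) : nat -> 'F_2 :=
  fun m => match (insub m : option 'I_n) with
           | Some j => s ord0 j
           | None => 0
           end.

(* The output sequence a_0, a_1, ... : entry of row s of B in column k. *)
Definition lfsr_seq (n : nat) (c : 'I_n -> 'F_2) (s : 'rV['F_2]_n) (k : nat)
  : 'F_2 :=
  lfsr_next c (lfsr_state c (init_state s) k).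

(* Set polynomial g_R(x) = prod_{Q nonempty subset of R} sum_{r in Q} x^r,
   for R = {r_0,...,r_{n-1}} given by an injective r. *)
Definition set_poly (n : nat) (r : 'I_n -> nat) : {poly 'F_2} :=
  \prod_(Q : {set 'I_n} | Q != set0) \sum_(i in Q) 'X^(r i).

(* Main.v *)
Require Import Defs.
From HB Require Import structures.
From mathcomp Require Import all_boot all_order all_algebra.
From mathcomp Require Import zify ring.
Import GRing.Theory.
Local Open Scope ring_scope.


Lemma F2_addxx (x : 'F_2) : x + x = 0.
Proof. by rewrite -mulr2n -mulr_natr (pcharf0 (pchar_Fp (isT : prime 2))) mulr0. Qed.

Lemma F2_neq0 (x : 'F_2) : x != 0 -> x = 1.
Proof. case: x => -[|[|m]] //= Hm _; first by apply/val_inj. Qed.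

Definition Rec n (c : 'I_n -> 'F_2) (b : nat -> 'F_2) :=
  forall k, b (k + n)%N = \sum_(i < n) c i * b (k + (n - i.+1))%N.
Arguments Rec {n}.

Definition Lam (b : nat -> 'F_2) (p : {poly 'F_2}) := \sum_(j < size p) p`_j * b j.

Lemma LamE (b : nat -> 'F_2) (p : {poly 'F_2}) (N : nat) : (size p <= N)%N -> Lam b p = \sum_(j < N) p`_j * b j.
Proof.
move=> hN; rewrite /Lam (big_ord_widen N (fun j => p`_j * b j) hN) big_mkcond /=.
apply: eq_bigr => i _; case: ifP => // /negbT; rewrite -leqNgt => h.
by rewrite nth_default // mul0r.
Qed.
Arguments LamE {b p N}.

Lemma Lam0 (b : nat -> 'F_2) : Lam b 0 = 0.
Proof. by rewrite /Lam size_poly0 big_ord0. Qed.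

Lemma LamD (b : nat -> 'F_2) (p q : {poly 'F_2}) : Lam b (p + q) = Lam b p + Lam b q.
Proof.
rewrite (LamE (size_polyD p q)) (LamE (leq_maxl (size p) (size q))).
rewrite (LamE (leq_maxr (size p) (size q))) -big_split /=.
by apply: eq_bigr => i _; rewrite coefD mulrDl.
Qed.

Lemma LamZ (b : nat -> 'F_2) (a : 'F_2) (p : {poly 'F_2}) : Lam b (a *: p) = a * Lam b p.
Proof.
rewrite (LamE (size_scale_leq a p)) /Lam mulr_sumr.
by apply: eq_bigr => i _; rewrite coefZ mulrA.
Qed.

Lemma Lam_sum (b : nat -> 'F_2) (I : finType) (P : pred I) (F : I -> {poly 'F_2}) :
  Lam b (\sum_(i | P i) F i) = \sum_(i | P i) Lam b (F i).
Proof. exact: (big_morph (Lam b) (LamD b) (Lam0 b)). Qed.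

Lemma LamXn (b : nat -> 'F_2) (m : nat) : Lam b 'X^m = b m.
Proof.
rewrite /Lam size_polyXn big_ord_recr /= coefXn eqxx mul1r big1 ?add0r //.
by move=> i _; rewrite coefXn (ltn_eqF (ltn_ord i)) mul0r.
Qed.

Lemma Lam_ext (b b' : nat -> 'F_2) (p : {poly 'F_2}) : (forall m, b m = b' m) -> Lam b p = Lam b' p.
Proof. by move=> H; apply: eq_bigr => i _; rewrite H. Qed.

Lemma LamX (b : nat -> 'F_2) (p : {poly 'F_2}) : Lam b ('X * p) = Lam (fun m => b m.+1) p.
Proof.
have hs : (size ('X * p)%R <= (size p).+1)%N.
  by apply: leq_trans (size_polyMleq 'X p) _; rewrite size_polyX.
rewrite (LamE hs) big_ord_recl coefXM eqxx mul0r add0r /Lam.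
by apply: eq_bigr => i _; rewrite coefXM /=.
Qed.

Lemma LamXn_mul (b : nat -> 'F_2) (k : nat) (p : {poly 'F_2}) : Lam b ('X^k * p) = Lam (fun m => b (k + m)%N) p.
Proof.
elim: k b => [|k IH] b; first by rewrite expr0 mul1r.
by rewrite exprS -mulrA LamX IH.
Qed.

Lemma Rec_shift n (c : 'I_n -> 'F_2) (b : nat -> 'F_2) (k : nat) : Rec c b -> Rec c (fun m => b (k + m)%N).
Proof. by move=> H j /=; rewrite addnA H; apply: eq_bigr => i _; rewrite addnA. Qed.
Arguments Rec_shift {n c b} k.

Lemma Rec_sub n (c : 'I_n -> 'F_2) (b1 b2 : nat -> 'F_2) : Rec c b1 -> Rec c b2 ->
  Rec c (fun m => b1 m - b2 m).
Proof.
by move=> H1 H2 k /=; rewrite H1 H2 -sumrB; apply: eq_bigr => i _; rewrite mulrBr.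
Qed.

Lemma Lam_f n (c : 'I_n -> 'F_2) (b : nat -> 'F_2) : Rec c b -> Lam b (charpoly_lfsr c) = 0.
Proof.
move=> H; have H0 : b n = \sum_(i < n) c i * b (n - i.+1)%N := H 0%N.
rewrite /charpoly_lfsr LamD LamXn Lam_sum.
under eq_bigr do rewrite mul_polyC LamZ LamXn.
by rewrite -H0 F2_addxx.
Qed.

Lemma Lam_mulf n (c : 'I_n -> 'F_2) (b : nat -> 'F_2) (q : {poly 'F_2}) : Rec c b -> Lam b (q * charpoly_lfsr c) = 0.
Proof.
elim/poly_ind: q b => [|q a IH] b Hb; first by rewrite mul0r Lam0.
rewrite mulrDl LamD mul_polyC LamZ Lam_f // mulr0 addr0.
rewrite [q * 'X]mulrC -mulrA LamX.
have := IH _ (Rec_shift 1 Hb). rewrite (@Lam_ext (fun m => b (1 + m)%N) (fun m => b m.+1)) //.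
Qed.

Lemma Lam_mod n (c : 'I_n -> 'F_2) (b : nat -> 'F_2) (p : {poly 'F_2}) : Rec c b ->
  Lam b p = Lam b (p %% charpoly_lfsr c).
Proof. by move=> H; rewrite {1}(divp_eq p (charpoly_lfsr c)) LamD Lam_mulf // add0r. Qed.
Arguments Lam_mod {n c b p}.
Arguments Lam_mulf {n c b q}.


Definition bsq n (c : 'I_n -> 'F_2) (s : 'rV['F_2]_n) (m : nat) : 'F_2 :=
  if (m < n)%N then init_state s m else lfsr_seq c s (m - n).
Arguments bsq {n}.

Lemma bseq_ge n (c : 'I_n -> 'F_2) (s : 'rV['F_2]_n) (k : nat) : bsq c s (k + n) = lfsr_seq c s k.
Proof. by rewrite /bsq ltnNge leq_addl /= addnK. Qed.

Lemma bseq_lt n (c : 'I_n -> 'F_2) (s : 'rV['F_2]_n) (m : nat) (h : (m < n)%N) : bsq c s m = s ord0 (Ordinal h).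
Proof. by rewrite /bsq h /init_state insubT; congr (s ord0 _); apply: val_inj. Qed.

Lemma state_b n (c : 'I_n -> 'F_2) (s : 'rV['F_2]_n) (k m : nat) : (m < n)%N ->
  lfsr_state c (init_state s) k m = bsq c s (k + m).
Proof.
elim: k m => [|k IH] m hm /=; first by rewrite /bsq add0n hm.
case: ifP => h; first by rewrite IH // addSnnS.
have -> : (k.+1 + m = k + n)%N by move/negbT: h; rewrite -leqNgt; lia.
by rewrite bseq_ge.
Qed.

Lemma Rec_b n (c : 'I_n -> 'F_2) (s : 'rV['F_2]_n) : Rec c (bsq c s).
Proof.
move=> k; rewrite bseq_ge /lfsr_seq /lfsr_next.
by apply: eq_bigr => i _; rewrite state_b //; have := ltn_ord i; lia.
Qed.

Lemma state0 n (c : 'I_n -> 'F_2) (k m : nat) : lfsr_state c (init_state (0 : 'rV['F_2]_n)) k m = 0.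
Proof.
elim: k m => [|k IH] m /=.
  by rewrite /init_state; case: insubP => // j _ _; rewrite mxE.
case: ifP => _; first exact: IH.
by rewrite /lfsr_next big1 // => i _; rewrite IH mulr0.
Qed.

Lemma seq0 n (c : 'I_n -> 'F_2) (k : nat) : lfsr_seq c 0 k = 0.
Proof. by rewrite /lfsr_seq /lfsr_next big1 // => i _; rewrite state0 mulr0. Qed.

Lemma size_cp n (c : 'I_n -> 'F_2) : size (charpoly_lfsr c) = n.+1 /\ charpoly_lfsr c \is monic.
Proof.
have hs : (size (\sum_(i < n) (c i)%:P * 'X^(n - i.+1))%R < size ('X^n : {poly 'F_2}))%N.
  rewrite size_polyXn ltnS.
  apply: (big_ind (fun p : {poly 'F_2} => size p <= n)%N).
  - by rewrite size_poly0.
  - by move=> p q hp hq; apply: leq_trans (size_polyD p q) _; rewrite geq_max hp hq.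
  move=> i _; rewrite mul_polyC; apply: leq_trans (size_scale_leq _ _) _.
  by rewrite size_polyXn; have := ltn_ord i; lia.
split; first by rewrite /charpoly_lfsr size_polyDl // size_polyXn.
by rewrite monicE /charpoly_lfsr lead_coefDl // lead_coefXn.
Qed.

Lemma irr_coprime (f p : {poly 'F_2}) : irreducible_poly f -> ~~ (f %| p) -> coprimep f p.
Proof.
move=> Hf Hn; rewrite coprimep_def; apply/negPn/negP => hd.
have e := Hf.2 _ hd (dvdp_gcdl f p).
by move: Hn; rewrite -(eqp_dvdl _ e) dvdp_gcdr.
Qed.

Lemma coprimeX n (c : 'I_n -> 'F_2) : irreducible_poly (charpoly_lfsr c) ->
  charpoly_lfsr c != 'X -> coprimep 'X (charpoly_lfsr c).
Proof.
move=> Hf HX; rewrite coprimep_sym.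
have -> : ('X : {poly 'F_2}) = 'X - 0%:P by rewrite subr0.
rewrite coprimep_XsubC; apply/negP; rewrite -dvdp_XsubCl => hd.
have e : ('X - 0%:P) %= charpoly_lfsr c by apply: (Hf.2 _ _ hd); rewrite size_XsubC.
have hm := (size_cp _ c).2.
move: HX; rewrite eqp_monic ?monicXsubC // in e.
by rewrite -(eqP e) subr0 eqxx.
Qed.


Lemma span_lemma n (f : {poly 'F_2}) (r : 'I_n -> nat) :
  size f = n.+1 ->
  (forall Q : {set 'I_n}, Q != set0 -> ~~ (f %| \sum_(j in Q) 'X^(r j))) ->
  forall p : {poly 'F_2}, (size p <= n)%N ->
  exists l : 'rV['F_2]_n, p = (\sum_j l ord0 j *: 'X^(r j)) %% f.
Proof.
move=> sf HQ p hp.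
have f0 : f != 0 by rewrite -size_poly_eq0 sf.
pose S (l : 'rV['F_2]_n) := \sum_j l ord0 j *: ('X^(r j) : {poly 'F_2}).
have sP l : (size (S l %% f)%R <= n)%N by rewrite -ltnS -sf ltn_modp.
pose psi (l : 'rV['F_2]_n) := \row_(i < n) (S l %% f)`_i.
have polyE (q1 q2 : {poly 'F_2}) : (size q1 <= n)%N -> (size q2 <= n)%N ->
    (forall i : 'I_n, q1`_i = q2`_i) -> q1 = q2.
  move=> h1 h2 h; apply/polyP => i; case: (ltnP i n) => hi; first exact: (h (Ordinal hi)).
  by rewrite !nth_default // (leq_trans _ hi).
have inj : injective psi.
  move=> l1 l2 E.
  have EP : S l1 %% f = S l2 %% f.
    by apply: polyE => // i; have := congr1 (fun v : 'rV['F_2]_n => v ord0 i) E; rewrite !mxE.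
  have hd : f %| \sum_j (l1 ord0 j - l2 ord0 j) *: ('X^(r j) : {poly 'F_2}).
    have -> : \sum_j (l1 ord0 j - l2 ord0 j) *: ('X^(r j) : {poly 'F_2}) = S l1 - S l2.
      by rewrite /S -sumrB; apply: eq_bigr => j _; rewrite scalerBl.
    by apply/modp_eq0P; rewrite modpD modpN EP subrr.
  pose Q := [set j | l1 ord0 j != l2 ord0 j].
  case: (eqVneq Q set0) => hQ.
    apply/rowP => j; apply/eqP; apply/negPn/negP => hj.
    have : j \in Q by rewrite inE.
    by rewrite hQ inE.
  have e : \sum_(j in Q) ('X^(r j) : {poly 'F_2}) =
      \sum_j (l1 ord0 j - l2 ord0 j) *: ('X^(r j) : {poly 'F_2}).
    rewrite [RHS](bigID (fun j => j \in Q)) /= [X in _ + X]big1 ?addr0 => [|j]; last first.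
      by rewrite inE negbK => /eqP ->; rewrite subrr scale0r.
    apply: eq_bigr => j hj.
    rewrite (@F2_neq0 (l1 ord0 j - l2 ord0 j)) ?scale1r // subr_eq0.
    by rewrite inE in hj.
  by move: (HQ Q hQ); rewrite e hd.
have [g gK Kg] := injF_bij inj.
exists (g (\row_(i < n) p`_i)).
apply: polyE => // [|i]; first exact: sP.
have := congr1 (fun v : 'rV['F_2]_n => v ord0 i) (Kg (\row_(i < n) p`_i)); rewrite !mxE => e.
by rewrite e.
Qed.

Lemma Zlem n (c : 'I_n -> 'F_2) (r : 'I_n -> nat) (b : nat -> 'F_2) :
  Rec c b -> coprimep 'X (charpoly_lfsr c) ->
  (forall Q : {set 'I_n}, Q != set0 -> ~~ (charpoly_lfsr c %| \sum_(j in Q) 'X^(r j))) ->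
  (forall j, b (n + r j)%N = 0) -> forall m, b m = 0.
Proof.
move=> Hb Hco HQ Hr m.
have sf := (size_cp _ c).1.
have Hb' := Rec_shift n Hb.
have L0 p : Lam (fun m => b (n + m)%N) p = 0.
  have hp : (size (p %% charpoly_lfsr c)%R <= n)%N.
    by rewrite -ltnS -sf ltn_modp -size_poly_eq0 sf.
  have [l El] := span_lemma _ _ _ sf HQ _ hp.
  rewrite (Lam_mod Hb') El -(Lam_mod Hb') Lam_sum big1 // => j _.
  by rewrite LamZ LamXn Hr mulr0.
have /Bezout_eq1_coprimepP [[u v] /= Huv] := coprimep_expl n Hco.
rewrite -LamXn -[X in Lam b X]mulr1 -Huv.
have -> : 'X^m * (u * 'X^n + v * charpoly_lfsr c) =
   'X^n * ('X^m * u) + ('X^m * v) * charpoly_lfsr c by ring.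
by rewrite LamD LamXn_mul L0 (Lam_mulf Hb) addr0.
Qed.


Lemma bseq_ord n (c : 'I_n -> 'F_2) (s : 'rV['F_2]_n) (j : 'I_n) : bsq c s j = s ord0 j.
Proof. by rewrite (bseq_lt _ _ _ _ (ltn_ord j)); congr (s ord0 _); apply: val_inj. Qed.

Theorem theorem6 (n : nat) (c : 'I_n -> 'F_2) (r : 'I_n -> nat) :
  (0 < n)%N ->
  irreducible_poly (charpoly_lfsr c) ->
  charpoly_lfsr c != 'X ->
  injective r ->
  (forall v : 'rV['F_2]_n, v != 0 ->
     exists s : 'rV['F_2]_n, s != 0 /\ forall j : 'I_n, lfsr_seq c s (r j) = v ord0 j)
  <-> ~~ (charpoly_lfsr c %| set_poly r).
Proof.
move=> n0 Hirr HX rinj.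
have sf := (size_cp _ c).1.
have Hco := @coprimeX _ _ Hirr HX.
split.
- move=> H; apply/negP => Hfg.
  case: (boolP [exists Q : {set 'I_n}, (Q != set0) &&
           (charpoly_lfsr c %| \sum_(j in Q) 'X^(r j))]) => [/existsP [Q /andP [hQ hdQ]] | hno].
  + case/set0Pn: hQ => j0 hj0.
    pose v : 'rV['F_2]_n := \row_j (j == j0)%:R.
    have v0 : v != 0.
      apply/eqP => /rowP /(_ j0); rewrite !mxE eqxx; apply/eqP; exact: oner_neq0.
    have [s [_ Hs]] := H v v0.
    have Hb' := Rec_shift n (Rec_b _ c s).
    have := Lam_mod (p := \sum_(j in Q) 'X^(r j)) Hb'.
    rewrite modp_eq0 // Lam0 Lam_sum.
    under eq_bigr do rewrite LamXn /= (addnC n) bseq_ge Hs mxE.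
    rewrite (bigD1 j0) //= eqxx big1 ?addr0; first by move/eqP; rewrite oner_eq0.
    by move=> j /andP [_ hj]; rewrite (negbTE hj).
  + have: coprimep (charpoly_lfsr c) (set_poly r).
      rewrite /set_poly; apply: (big_ind (coprimep (charpoly_lfsr c))) => [|p q hp hq|Q hQ]; first exact: coprimep1.
        by rewrite coprimepMr hp hq.
      apply: (irr_coprime _ _ Hirr); apply/negP => hd.
      by move/negP: hno; apply; apply/existsP; exists Q; rewrite hQ hd.
    rewrite coprimep_sym => /(coprimep_dvdr Hfg).
    by rewrite coprimepp sf eqSS => /eqP e; rewrite e in n0.
- move=> Hnd.
  have HQ (Q : {set 'I_n}) : Q != set0 -> ~~ (charpoly_lfsr c %| \sum_(j in Q) 'X^(r j)).
    move=> hQ; apply: contra Hnd => hd; rewrite /set_poly (bigD1 Q) //=; exact: dvdp_mulr.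
  pose phi (s : 'rV['F_2]_n) := \row_j lfsr_seq c s (r j).
  have inj : injective phi.
    move=> s1 s2 E.
    have Hr (j : 'I_n) : bsq c s1 (n + r j)%N - bsq c s2 (n + r j)%N = 0.
      rewrite !(addnC n) !bseq_ge.
      have := congr1 (fun w : 'rV['F_2]_n => w ord0 j) E; rewrite !mxE => ->.
      by rewrite subrr.
    have Z := Zlem _ _ _ _ (Rec_sub _ _ _ _ (Rec_b _ c s1) (Rec_b _ c s2)) Hco HQ Hr.
    apply/rowP => j; have := Z j; rewrite !bseq_ord => /eqP; rewrite subr_eq0 => /eqP.
    by [].
  have [g gK Kg] := injF_bij inj.
  move=> v hv; exists (g v); split.
    apply: contra hv => /eqP e; rewrite -(Kg v) e; apply/eqP/rowP => j.
    by rewrite !mxE seq0.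
  move=> j; have := congr1 (fun w : 'rV['F_2]_n => w ord0 j) (Kg v); rewrite !mxE.
  by [].
Qed.
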